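(* The topological product of a countable family of domain-complete (resp. LCS-complete) spaces is domain-complete (resp. LCS-complete).
   Context: A space is domain-complete (resp. LCS-complete) if it is homeomorphic to a $G_\delta$ subset (countable intersection of open sets), with the subspace topology, of some continuous dcpo with its Scott topology (resp. of some locally compact sober space, locally compact meaning every point has a neighborhood base of compact saturated sets). *)

(* Defs.v *)
From Stdlib Require Import List.

Set Implicit Arguments.

Definition topology (X : Type) := (X -> Prop) -> Prop.

Definition is_topology (X : Type) (O : topology X) : Prop :=
  O (fun _ => True) /\
  (forall U V, O U -> O V -> O (fun x => U x /\ V x)) /\
  (forall F : (X -> Prop) -> Prop, (forall U, F U -> O U) ->
     O (fun x => exists U, F U /\ U x)).

Definition continuous (X Y : Type) (OX : topology X) (OY : topology Y)
  (f : X -> Y) : Prop :=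
  forall V, OY V -> OX (fun x => V (f x)).

Definition homeomorphic (X Y : Type) (OX : topology X) (OY : topology Y) : Prop :=
  exists (f : X -> Y) (g : Y -> X),
    (forall x, g (f x) = x) /\ (forall y, f (g y) = y) /\
    continuous OX OY f /\ continuous OY OX g.

Definition subspace (X : Type) (O : topology X) (A : X -> Prop)
  : topology {x : X | A x} :=
  fun V => exists U, O U /\ forall y : {x : X | A x}, V y <-> U (proj1_sig y).

Definition G_delta (X : Type) (O : topology X) (A : X -> Prop) : Prop :=
  exists U : nat -> X -> Prop, (forall n, O (U n)) /\
    forall x, A x <-> (forall n, U n x).

Definition box (X : nat -> Type) (N : nat) (V : forall n, X n -> Prop)
  (y : forall n, X n) : Prop :=
  forall i, i < N -> V i (y i).
Arguments box : clear implicits.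

Arguments box : clear implicits.
Definition product_topology (X : nat -> Type) (O : forall n, topology (X n))
  : topology (forall n, X n) :=
  fun W => forall x, W x ->
    exists (N : nat) (V : forall n, X n -> Prop),
      (forall i, O i (V i)) /\ box X N V x /\ (forall y, box X N V y -> W y).

Definition is_poset (D : Type) (le : D -> D -> Prop) : Prop :=
  (forall x, le x x) /\ (forall x y z, le x y -> le y z -> le x z) /\
  (forall x y, le x y -> le y x -> x = y).

Definition directed (D : Type) (le : D -> D -> Prop) (S : D -> Prop) : Prop :=
  (exists d, S d) /\
  forall a b, S a -> S b -> exists c, S c /\ le a c /\ le b c.

Definition is_sup (D : Type) (le : D -> D -> Prop) (S : D -> Prop) (s : D) : Prop :=
  (forall d, S d -> le d s) /\ (forall u, (forall d, S d -> le d u) -> le s u).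

Definition is_dcpo (D : Type) (le : D -> D -> Prop) : Prop :=
  is_poset le /\ forall S, directed le S -> exists s, is_sup le S s.

Definition way_below (D : Type) (le : D -> D -> Prop) (x y : D) : Prop :=
  forall S s, directed le S -> is_sup le S s -> le y s ->
    exists d, S d /\ le x d.

Definition is_continuous_dcpo (D : Type) (le : D -> D -> Prop) : Prop :=
  is_dcpo le /\
  forall x, directed le (fun y => way_below le y x) /\
            is_sup le (fun y => way_below le y x) x.

Definition scott_open (D : Type) (le : D -> D -> Prop) : topology D :=
  fun U => (forall x y, U x -> le x y -> U y) /\
    (forall S s, directed le S -> is_sup le S s -> U s -> exists d, S d /\ U d).

Definition is_closed (X : Type) (O : topology X) (C : X -> Prop) : Prop :=
  O (fun x => ~ C x).

Definition closure_pt (X : Type) (O : topology X) (x : X) : X -> Prop :=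
  fun y => forall C, is_closed O C -> C x -> C y.

Definition irreducible_closed (X : Type) (O : topology X) (C : X -> Prop) : Prop :=
  is_closed O C /\ (exists x, C x) /\
  forall C1 C2, is_closed O C1 -> is_closed O C2 ->
    (forall x, C x -> C1 x \/ C2 x) ->
    (forall x, C x -> C1 x) \/ (forall x, C x -> C2 x).

Definition sober (X : Type) (O : topology X) : Prop :=
  forall C, irreducible_closed O C ->
    exists x, (forall y, C y <-> closure_pt O x y) /\
      forall x', (forall y, C y <-> closure_pt O x' y) -> x' = x.

Definition compact (X : Type) (O : topology X) (K : X -> Prop) : Prop :=
  forall F : (X -> Prop) -> Prop, (forall U, F U -> O U) ->
    (forall x, K x -> exists U, F U /\ U x) ->
    exists l : list (X -> Prop), (forall U, In U l -> F U) /\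
      (forall x, K x -> exists U, In U l /\ U x).

Definition saturated (X : Type) (O : topology X) (Q : X -> Prop) : Prop :=
  forall y, (forall U, O U -> (forall z, Q z -> U z) -> U y) -> Q y.

Definition locally_compact (X : Type) (O : topology X) : Prop :=
  forall x U, O U -> U x ->
    exists Q V, compact O Q /\ saturated O Q /\ O V /\ V x /\
      (forall y, V y -> Q y) /\ (forall y, Q y -> U y).

Definition domain_complete (X : Type) (O : topology X) : Prop :=
  exists (D : Type) (le : D -> D -> Prop) (A : D -> Prop),
    is_continuous_dcpo le /\ G_delta (scott_open le) A /\
    homeomorphic O (subspace (scott_open le) A).

Definition LCS_complete (X : Type) (O : topology X) : Prop :=
  exists (Y : Type) (OY : topology Y) (A : Y -> Prop),
    is_topology OY /\ locally_compact OY /\ sober OY /\ G_delta OY A /\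
    homeomorphic O (subspace OY A).
Arguments product_topology : clear implicits.

(* Main.v *)
Require Import Defs.
From Stdlib Require Import List Arith Lia Classical ClassicalEpsilon
  FunctionalExtensionality PropExtensionality ProofIrrelevance Eqdep_dec Cantor.

Unset Implicit Arguments.

Lemma set_ext {X : Type} (A B : X -> Prop) : (forall x, A x <-> B x) -> A = B.
Proof. intro H; apply functional_extensionality; intro x; apply propositional_extensionality; auto. Qed.

Definition upd {X : nat -> Type} (z : forall n, X n) (k : nat) (t : X k) : forall n, X n :=
  fun i => match Nat.eq_dec k i with left e => eq_rect k X t i e | right _ => z i end.

Lemma upd_eq {X : nat -> Type} (z : forall n, X n) k t : upd z k t k = t.
Proof. unfold upd. destruct (Nat.eq_dec k k) as [e|n]; [|congruence].
 rewrite (UIP_dec Nat.eq_dec e eq_refl). reflexivity. Qed.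

Lemma upd_neq {X : nat -> Type} (z : forall n, X n) k t i : k <> i -> upd z k t i = z i.
Proof. intro H. unfold upd. destruct (Nat.eq_dec k i); [congruence|reflexivity]. Qed.

Lemma topo_full X (O : topology X) : is_topology O -> O (fun _ => True).
Proof. intros [H _]; exact H. Qed.

Lemma box_open (X : nat -> Type) (O : forall n, topology (X n)) N V :
  (forall i, O i (V i)) -> product_topology X O (box X N V).
Proof. intros HV x Hx. exists N, V. split; [exact HV|split; auto]. Qed.

Lemma proj_open (X : nat -> Type) (O : forall n, topology (X n)) n U :
  (forall i, is_topology (O i)) -> O n U -> product_topology X O (fun y => U (y n)).
Proof.
  intros HT HU x Hx.
  set (V := fun i => match Nat.eq_dec n i with
            | left e => eq_rect n (fun j => X j -> Prop) U i e
            | right _ => fun _ => True end).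
  exists (S n), V. split; [|split].
  - intro i. unfold V. destruct (Nat.eq_dec n i) as [e|].
    + subst. exact HU.
    + apply topo_full; auto.
  - intros i Hi. unfold V. destruct (Nat.eq_dec n i) as [e|]; [|exact I].
    subst. exact Hx.
  - intros y Hy. specialize (Hy n (Nat.lt_succ_diag_r n)).
  assert (Vn : V n = U).
  { unfold V. destruct (Nat.eq_dec n n) as [e|]; [|congruence].
    rewrite (UIP_dec Nat.eq_dec e eq_refl). reflexivity. }
    rewrite Vn in Hy. exact Hy.
Qed.

Lemma dchoice {I : Type} {T : I -> Type} (P : forall i, T i -> Prop) :
  (forall i, exists t, P i t) -> exists f : forall i, T i, forall i, P i (f i).
Proof.
  intro H. exists (fun i => proj1_sig (constructive_indefinite_description _ (H i))).
  intro i. exact (proj2_sig (constructive_indefinite_description _ (H i))).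
Qed.

Lemma box_le (X : nat -> Type) N V y : box X N V y -> forall M, M <= N -> box X M V y.
Proof. intros H M HM i Hi. apply H. lia. Qed.

Section ProdEmbed.
Variables (X Y : nat -> Type) (OX : forall n, topology (X n)) (OY : forall n, topology (Y n))
  (A : forall n, Y n -> Prop).

Definition PA : (forall n, Y n) -> Prop := fun y => forall n, A n (y n).

Lemma prod_Gdelta : (forall n, is_topology (OY n)) -> (forall n, G_delta (OY n) (A n)) ->
  G_delta (product_topology Y OY) PA.
Proof.
  intros HT HG.
  destruct (dchoice (T := fun n => nat -> Y n -> Prop)
    (fun n U => (forall k, OY n (U k)) /\ forall x, A n x <-> (forall k, U k x)) HG) as [U HU].
  exists (fun m (y : forall n, Y n) => U (fst (of_nat m)) (snd (of_nat m)) (y (fst (of_nat m)))).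
  split.
  - intro m. apply proj_open; auto. apply (proj1 (HU _)).
  - intro y. split.
    + intros Hy m. apply (proj2 (HU _)). apply Hy.
    + intros Hy n. apply (proj2 (HU n)). intro k.
      specialize (Hy (to_nat (n, k))). rewrite cancel_of_to in Hy. exact Hy.
Qed.

Lemma prod_homeo : (forall n, homeomorphic (OX n) (subspace (OY n) (A n))) ->
  homeomorphic (product_topology X OX) (subspace (product_topology Y OY) PA).
Proof.
  intro HH.
  destruct (dchoice (T := fun n => X n -> {y : Y n | A n y}) (fun n f =>
     exists g, (forall x, g (f x) = x) /\ (forall y, f (g y) = y) /\
       continuous (OX n) (subspace (OY n) (A n)) f /\ continuous (subspace (OY n) (A n)) (OX n) g) HH)
     as [f Hf].
  destruct (dchoice (T := fun n => {y : Y n | A n y} -> X n) (fun n g =>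
      (forall x, g (f n x) = x) /\ (forall y, f n (g y) = y) /\
       continuous (OX n) (subspace (OY n) (A n)) (f n) /\ continuous (subspace (OY n) (A n)) (OX n) g) Hf)
     as [g Hg].
  set (F := fun x : forall n, X n =>
          exist PA (fun n => proj1_sig (f n (x n))) (fun n => proj2_sig (f n (x n)))).
  set (G := fun y : {y | PA y} => fun n => g n (exist (A n) (proj1_sig y n) (proj2_sig y n))).
  exists F, G. split; [|split; [|split]].
  - intro x. apply functional_extensionality_dep. intro n. unfold G, F; simpl.
    transitivity (g n (f n (x n))); [|apply Hg]. f_equal. destruct (f n (x n)); reflexivity.
  - intros [y Hy]. unfold F, G; simpl. 
    assert (E : (fun n => proj1_sig (f n (g n (exist (A n) (y n) (Hy n))))) = y).
    { apply functional_extensionality_dep. intro n. rewrite (proj1 (proj2 (Hg n))). reflexivity. }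
    apply eq_sig_hprop; [intros; apply proof_irrelevance|]. simpl. exact E.
  - intros V [U [HU HVU]]. intros x Hx. apply HVU in Hx. simpl in Hx.
    destruct (HU _ Hx) as [N [W [HW [Hb Hsub]]]].
    exists N, (fun i a => W i (proj1_sig (f i a))). split; [|split].
    + intro i. apply (proj1 (proj2 (proj2 (Hg i))) (fun b => W i (proj1_sig b))).
      exists (W i). split; [apply HW|]. intro; reflexivity.
    + intros i Hi. apply Hb; auto.
    + intros z Hz. apply HVU. simpl. apply Hsub. intros i Hi. apply Hz; auto.
  - intros W HW.
    exists (fun z => exists N (V : forall n, Y n -> Prop), (forall i, OY i (V i)) /\ box Y N V z /\
              forall y : {y | PA y}, box Y N V (proj1_sig y) -> W (G y)).
    split.
    + intros z [N [V [HV [Hb Hs]]]]. exists N, V. split; [auto|split; auto].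
      intros z' Hz'. exists N, V. auto.
    + intros y. split.
      * intro Hy. destruct (HW _ Hy) as [N [V [HV [Hb Hs]]]].
        destruct (dchoice (T := fun i => Y i -> Prop) (fun i V' => OY i V' /\
           forall b : {y | A i y}, V i (g i b) <-> V' (proj1_sig b))) as [V' HV'].
        { intro i. destruct (proj2 (proj2 (proj2 (Hg i))) (V i) (HV i)) as [V' HV'].
          exists V'. exact HV'. }
        exists N, V'. split; [intro i; apply HV'|split].
        -- intros i Hi. apply (proj2 (HV' i) (exist _ _ (proj2_sig y i))). apply Hb; auto.
        -- intros y' Hy'. apply Hs. intros i Hi. apply (proj2 (HV' i) (exist _ _ (proj2_sig y' i))).
           apply Hy'; auto.
      * intros [N [V [HV [Hb Hs]]]]. apply Hs. exact Hb.
Qed.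
End ProdEmbed.

Set Implicit Arguments.

Section Dcpo.
Variables (D : Type) (le : D -> D -> Prop).
Hypothesis Hc : is_continuous_dcpo le.

Let Hpo : is_poset le := proj1 (proj1 Hc).
Lemma le_refl x : le x x. Proof. apply (proj1 Hpo). Qed.
Lemma le_trans x y z : le x y -> le y z -> le x z. Proof. apply (proj1 (proj2 Hpo)). Qed.
Lemma le_antisym x y : le x y -> le y x -> x = y. Proof. apply (proj2 (proj2 Hpo)). Qed.

Lemma sup_unique S s s' : is_sup le S s -> is_sup le S s' -> s = s'.
Proof. intros [H1 H2] [H3 H4]. apply le_antisym; auto. Qed.

Lemma single_dir y : directed le (fun z => z = y).
Proof. split. exists y; auto. intros a b -> ->. exists y. split; auto. split; apply le_refl. Qed.
Lemma single_sup y : is_sup le (fun z => z = y) y.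
Proof. split. intros d ->; apply le_refl. intros u Hu; apply Hu; auto. Qed.

Lemma wb_le x y : way_below le x y -> le x y.
Proof. intro H. destruct (H _ _ (single_dir y) (single_sup y) (le_refl y)) as [d [-> Hd]]. exact Hd. Qed.

Lemma wb_le_trans x y z : way_below le x y -> le y z -> way_below le x z.
Proof. intros H Hyz S s HS Hs Hzs. apply (H S s HS Hs). eapply le_trans; eauto. Qed.

Lemma le_wb_trans x y z : le x y -> way_below le y z -> way_below le x z.
Proof. intros Hxy H S s HS Hs Hzs. destruct (H S s HS Hs Hzs) as [d [Sd Hd]].
  exists d; split; auto. eapply le_trans; eauto. Qed.

Lemma fin_ub S (h : nat -> D) N : directed le S -> (forall i, i < N -> S (h i)) ->
  exists d, S d /\ forall i, i < N -> le (h i) d.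
Proof.
  intros [[d0 Hd0] Hdir]. induction N as [|N IH]; intros HS.
  - exists d0. split; auto. intros; lia.
  - destruct IH as [d [Sd Hd]]. { intros; apply HS; lia. }
    destruct (Hdir d (h N) Sd (HS N (Nat.lt_succ_diag_r N))) as [c [Sc [H1 H2]]].
    exists c. split; auto. intros i Hi. destruct (Nat.eq_dec i N) as [->|]; auto.
    eapply le_trans; [apply Hd; lia|exact H1].
Qed.

Lemma interpolate x y : way_below le x y -> exists d, way_below le x d /\ way_below le d y.
Proof.
  intro Hxy.
  set (T := fun c => exists d, way_below le c d /\ way_below le d y).
  assert (HT : directed le T).
  { destruct (proj2 Hc y) as [[[d Hd] Hdir] _].
    split.
    - destruct (proj2 Hc d) as [[[c Hc'] _] _]. exists c, d. auto.
    - intros a b [d1 [H1 H1']] [d2 [H2 H2']].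
      destruct (Hdir d1 d2 H1' H2') as [d3 [H3 [L1 L2]]].
      destruct (proj1 (proj2 Hc d3)) as [_ Hdir3].
      destruct (Hdir3 a b (wb_le_trans H1 L1) (wb_le_trans H2 L2)) as [c [Hc3 [La Lb]]].
      exists c. split; [exists d3; auto|auto]. }
  assert (Hs : is_sup le T y).
  { split.
    - intros c [d [H1 H2]]. apply le_trans with d; apply wb_le; auto.
    - intros u Hu. apply (proj2 (proj2 (proj2 Hc y))). intros d Hd.
      apply (proj2 (proj2 (proj2 Hc d))). intros c Hcd. apply Hu. exists d; auto. }
  destruct (Hxy T y HT Hs (le_refl y)) as [c [[d [H1 H2]] Hxc]].
  exists d. split; auto. eapply le_wb_trans; eauto.
Qed.

Lemma wu_open x : scott_open le (fun y => way_below le x y).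
Proof.
  split.
  - intros a b Ha Hab. eapply wb_le_trans; eauto.
  - intros S s HS Hs Hxs. destruct (interpolate Hxs) as [d [H1 H2]].
    destruct (H2 S s HS Hs (le_refl s)) as [e [Se He]]. exists e. split; auto.
    eapply wb_le_trans; eauto.
Qed.

Lemma bot_wb b y : (forall z, le b z) -> way_below le b y.
Proof. intros Hb S s [[d Hd] _] _ _. exists d. auto. Qed.

End Dcpo.

Set Implicit Arguments.

Lemma homeo_trans (X Y Z : Type) (OX : topology X) (OY : topology Y) (OZ : topology Z) :
  homeomorphic OX OY -> homeomorphic OY OZ -> homeomorphic OX OZ.
Proof.
  intros [f [g [H1 [H2 [H3 H4]]]]] [f' [g' [H1' [H2' [H3' H4']]]]].
  exists (fun x => f' (f x)), (fun z => g (g' z)). split; [|split; [|split]].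
  - intro x. rewrite H1'. auto.
  - intro z. rewrite H2. auto.
  - intros V HV. apply (H3 (fun y => V (f' y))). apply H3'. auto.
  - intros V HV. apply (H4' (fun y => V (g y))). apply H4. auto.
Qed.

Lemma embed_transfer (Y Z : Type) (OY : topology Y) (OZ : topology Z) (e : Y -> Z)
  (E : Z -> Prop) (A : Y -> Prop) :
  (forall U, OY U -> exists U', OZ U' /\ forall y, U y <-> U' (e y)) ->
  (forall U', OZ U' -> OY (fun y => U' (e y))) ->
  OZ E -> (forall z, E z <-> exists y, z = e y) -> (forall y y', e y = e y' -> y = y') ->
  G_delta OY A ->
  G_delta OZ (fun z => exists y, z = e y /\ A y) /\
  homeomorphic (subspace OY A) (subspace OZ (fun z => exists y, z = e y /\ A y)).
Proof.
  intros Ha Hb HE HEe Hinj [U [HU HAU]].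
  split.
  - destruct (dchoice (T := fun _ : nat => Z -> Prop)
       (fun k U' => OZ U' /\ forall y, U k y <-> U' (e y))) as [U' HU'].
    { intro k. apply Ha. apply HU. }
    exists (fun k => match k with 0 => E | S k => U' k end). split.
    + intros [|k]; auto. apply HU'.
    + intro z. split.
      * intros [y [-> Hy]] [|k].
        -- apply HEe. eauto.
        -- apply HU'. apply HAU. auto.
      * intro Hz. destruct (proj1 (HEe z) (Hz 0)) as [y ->]. exists y. split; auto.
        apply HAU. intro k. apply HU'. apply (Hz (S k)).
  - set (A' := fun z => exists y, z = e y /\ A y).
    set (F := fun y : {y | A y} => exist A' (e (proj1_sig y)) (ex_intro _ (proj1_sig y) (conj eq_refl (proj2_sig y)))).
    set (w := fun z : {z | A' z} => constructive_indefinite_description _ (proj2_sig z)).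
    set (G := fun z : {z | A' z} => exist A (proj1_sig (w z)) (proj2 (proj2_sig (w z)))).
    assert (HG : forall z, e (proj1_sig (G z)) = proj1_sig z).
    { intro z. unfold G; simpl. symmetry. apply (proj1 (proj2_sig (w z))). }
    exists F, G. split; [|split; [|split]].
    + intro y. apply eq_sig_hprop; [intros; apply proof_irrelevance|].
      apply Hinj. rewrite HG. reflexivity.
    + intro z. apply eq_sig_hprop; [intros; apply proof_irrelevance|].
      simpl. apply HG.
    + intros V [U' [HU' HV]]. exists (fun y => U' (e y)). split; [apply Hb; auto|].
      intro y. rewrite HV. reflexivity.
    + intros V [U0 [HU0 HV]]. destruct (Ha _ HU0) as [U' [HU' HUU']].
      exists U'. split; auto. intro z. rewrite HV, HUU', HG. reflexivity.
Qed.

Lemma topo_eq (X : Type) (O1 O2 : topology X) : (forall U, O1 U <-> O2 U) -> O1 = O2.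
Proof. intro H. apply functional_extensionality. intro U. apply propositional_extensionality. auto. Qed.

Definition lift_le (D : Type) (le : D -> D -> Prop) (x y : option D) : Prop :=
  match x, y with
  | None, _ => True
  | Some a, Some b => le a b
  | Some _, None => False
  end.

Definition lift_set (D : Type) (U : D -> Prop) (o : option D) : Prop :=
  match o with Some a => U a | None => False end.

Section Lift.
Variables (D : Type) (le : D -> D -> Prop).
Hypothesis Hc : is_continuous_dcpo le.
Notation L := (lift_le le).

Lemma lift_poset : is_poset L.
Proof.
  split; [|split].
  - intros [a|]; simpl; auto. apply (le_refl Hc).
  - intros [a|] [b|] [c|]; simpl; try tauto. apply (le_trans Hc).
  - intros [a|] [b|]; simpl; try tauto. intros; f_equal; apply (le_antisym Hc); auto.
Qed.

Lemma lift_sup_some S s : directed L S -> is_sup L S (Some s) ->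
  (exists a, S (Some a)) /\ is_sup le (fun a => S (Some a)) s.
Proof.
  intros [_ Hdir] [Hub Hl]. split.
  - apply NNPP. intro Hn. specialize (Hl None). simpl in Hl. apply Hl.
    intros [d|] Hd; simpl; auto. apply Hn; eauto.
  - split.
    + intros a Ha. apply (Hub _ Ha).
    + intros u Hu. apply (Hl (Some u)). intros [d|] Hd; simpl; auto.
Qed.

Lemma lift_dir_some S : directed L S -> (exists a, S (Some a)) -> directed le (fun a => S (Some a)).
Proof.
  intros [_ Hdir] Hne. split; auto. intros a b Ha Hb.
  destruct (Hdir _ _ Ha Hb) as [[c|] [Hc' [H1 H2]]]; simpl in *; try tauto.
  exists c; auto.
Qed.

Lemma lift_img_dir S : directed le S -> directed L (fun o => exists a, S a /\ o = Some a).
Proof.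
  intros [[d Hd] Hdir]. split. exists (Some d); eauto.
  intros x y [a [Ha ->]] [b [Hb ->]]. destruct (Hdir a b Ha Hb) as [c [Hc' [H1 H2]]].
  exists (Some c). split; eauto.
Qed.

Lemma lift_img_sup S s : directed le S -> is_sup le S s -> is_sup L (fun o => exists a, S a /\ o = Some a) (Some s).
Proof.
  intros [[d Hd] _] [Hub Hl]. split.
  - intros x [a [Ha ->]]. simpl. auto.
  - intros [u|] Hu; simpl.
    + apply Hl. intros a Ha. apply (Hu (Some a)). eauto.
    + apply (Hu (Some d)). eauto.
Qed.

Lemma lift_dcpo_sup S : directed L S -> exists s, is_sup L S s.
Proof.
  intros HS. destruct (classic (exists a, S (Some a))) as [Hne|Hne].
  - destruct (proj2 (proj1 Hc) _ (lift_dir_some HS Hne)) as [s [Hub Hl]].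
    exists (Some s). split.
    + intros [d|] Hd; simpl; auto.
    + intros [u|] Hu; simpl.
      * apply Hl. intros a Ha. apply (Hu _ Ha).
      * destruct Hne as [a Ha]. apply (Hu _ Ha).
  - exists None. split.
    + intros [d|] Hd; simpl; auto. apply Hne; eauto.
    + intros; simpl; auto.
Qed.

Lemma lift_wb a b : way_below L (Some a) (Some b) <-> way_below le a b.
Proof.
  split.
  - intros H S s HS Hs Hbs.
    destruct (H _ _ (lift_img_dir HS) (lift_img_sup HS Hs) Hbs) as [d [[c [Hc' ->]] Hac]].
    exists c. auto.
  - intros H S [s|] HS Hs Hbs; simpl in Hbs; try tauto.
    destruct (lift_sup_some HS Hs) as [Hne Hs'].
    destruct (H _ _ (lift_dir_some HS Hne) Hs' Hbs) as [d [Hd Had]].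
    exists (Some d). auto.
Qed.

Lemma lift_cont : is_continuous_dcpo L.
Proof.
  split; [split; [apply lift_poset|apply lift_dcpo_sup]|].
  assert (Hbot : forall y, way_below L None y).
  { intros y S s [[d Hd] _] _ _. exists d; simpl; auto. }
  intros [b|].
  - destruct (proj2 Hc b) as [[[a0 Ha0] Hdir] [Hub Hl]].
    split; [split|split].
    + exists None. auto.
    + intros [x|] [y|] Hx Hy.
      * apply lift_wb in Hx. apply lift_wb in Hy.
        destruct (Hdir _ _ Hx Hy) as [c [Hc' [H1 H2]]]. exists (Some c).
        split; [apply lift_wb; auto|simpl; auto].
      * exists (Some x). split; auto. split; simpl; auto. apply (le_refl Hc).
      * exists (Some y). split; auto. split; simpl; auto. apply (le_refl Hc).
      * exists None. split; simpl; auto.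
    + intros [x|] Hx; simpl; auto. apply lift_wb in Hx. apply Hub; auto.
    + intros [u|] Hu; simpl.
      * apply Hl. intros d Hd. apply (Hu (Some d)). apply lift_wb. auto.
      * apply (Hu (Some a0)). apply lift_wb. auto.
  - assert (HN : forall x, way_below L x None -> x = None).
    { intros x Hx. destruct (Hx (fun z => z = None) None) as [d [-> Hd]].
      - split. exists None; auto. intros a b -> ->. exists None. simpl; auto.
      - split. intros d ->; simpl; auto. intros u Hu; apply Hu; auto.
      - simpl; auto.
      - destruct x; simpl in Hd; tauto. }
    split; [split|split].
    + exists None. auto.
    + intros x y Hx Hy. exists None. rewrite (HN x Hx), (HN y Hy). simpl; auto.
    + intros x Hx. rewrite (HN x Hx). simpl; auto.
    + intros; simpl; auto.
Qed.
End Lift.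

Section LiftScott.
Variables (D : Type) (le : D -> D -> Prop).
Hypothesis Hc : is_continuous_dcpo le.
Notation L := (lift_le le).

Lemma lift_scott_a U : scott_open le U -> scott_open L (lift_set U).
Proof.
  intros [Hup Hsup]. split.
  - intros [a|] [b|]; simpl; try tauto. apply Hup.
  - intros S [s|] HS Hs Hu; simpl in Hu; try tauto.
    destruct (lift_sup_some HS Hs) as [Hne Hs'].
    destruct (Hsup _ _ (lift_dir_some HS Hne) Hs' Hu) as [d [Hd Hud]].
    exists (Some d). auto.
Qed.

Lemma lift_scott_b U' : scott_open L U' -> scott_open le (fun a => U' (Some a)).
Proof.
  intros [Hup Hsup]. split.
  - intros a b Ha Hab. apply (Hup (Some a) (Some b)); auto.
  - intros S s HS Hs Hu.
    destruct (Hsup _ _ (lift_img_dir HS) (lift_img_sup HS Hs) Hu) as [o [[a [Ha ->]] Ho]].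
    exists a. auto.
Qed.

Lemma scott_full : scott_open le (fun _ => True).
Proof. split; auto. intros S s [[d Hd] _] _ _. exists d; auto. Qed.

Lemma lift_domain (X : Type) (OX : topology X) (A : D -> Prop) :
  G_delta (scott_open le) A -> homeomorphic OX (subspace (scott_open le) A) ->
  G_delta (scott_open L) (fun z => exists y, z = Some y /\ A y) /\
  homeomorphic OX (subspace (scott_open L) (fun z => exists y, z = Some y /\ A y)).
Proof.
  intros HG HH.
  destruct (@embed_transfer _ _ (scott_open le) (scott_open L) Some (lift_set (fun _ => True)) A)
    as [H1 H2]; auto.
  - intros U HU. exists (lift_set U). split; [apply lift_scott_a; auto|]. intro; simpl; tauto.
  - apply lift_scott_b.
  - apply lift_scott_a. apply scott_full.
  - intros [z|]; simpl. split; eauto. split; [tauto|]. intros [y Hy]; discriminate.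
  - intros y y' H; injection H; auto.
  - split; auto. eapply homeo_trans; eauto.
Qed.
End LiftScott.

Set Implicit Arguments.


Section Prod.
Unset Implicit Arguments.
Variables (E : nat -> Type) (le : forall n, E n -> E n -> Prop) (bot : forall n, E n).
Set Implicit Arguments.
Hypothesis Hc : forall n, is_continuous_dcpo (le n).
Hypothesis Hbot : forall n x, le n (bot n) x.

Definition ple (x y : forall n, E n) : Prop := forall n, le n (x n) (y n).
Definition proj (S : (forall n, E n) -> Prop) i (a : E i) : Prop := exists z, S z /\ z i = a.
Arguments proj S i a : clear implicits.

Lemma ple_poset : is_poset ple.
Proof.
  split; [|split].
  - intros x n. apply (le_refl (Hc n)).
  - intros x y z H1 H2 n. eapply (le_trans (Hc n)); eauto.
  - intros x y H1 H2. apply functional_extensionality_dep. intro n. apply (le_antisym (Hc n)); auto.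
Qed.

Lemma proj_dir S i : directed ple S -> directed (le i) (proj S i).
Proof.
  intros [[d Hd] Hdir]. split. exists (d i), d; auto.
  intros a b [z [Hz <-]] [z' [Hz' <-]]. destruct (Hdir z z' Hz Hz') as [c [Hc' [H1 H2]]].
  exists (c i). split; [exists c; auto|auto].
Qed.

Lemma psup_is_sup S s : (forall i, is_sup (le i) (proj S i) (s i)) -> is_sup ple S s.
Proof.
  intro H. split.
  - intros d Hd i. apply (proj1 (H i)). exists d; auto.
  - intros u Hu i. apply (proj2 (H i)). intros a [z [Hz <-]]. apply Hu; auto.
Qed.

Lemma p_sup_exists S : directed ple S -> exists s, forall i, is_sup (le i) (proj S i) (s i).
Proof.
  intro HS. apply (dchoice (T := E) (fun i a => is_sup (le i) (proj S i) a)). intro i. apply (proj2 (proj1 (Hc i))). apply proj_dir; auto.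
Qed.

Lemma p_sup_char S s : directed ple S -> is_sup ple S s -> forall i, is_sup (le i) (proj S i) (s i).
Proof.
  intros HS Hs. destruct (p_sup_exists HS) as [s' Hs'].
  assert (s = s').
  { destruct Hs as [A1 A2]. destruct (@psup_is_sup S s' Hs') as [B1 B2].
    apply (proj2 (proj2 ple_poset)); auto. }
  subst; auto.
Qed.

Lemma pfin_ub S (h : nat -> forall n, E n) N : directed ple S -> (forall i, i < N -> S (h i)) ->
  exists d, S d /\ forall i, i < N -> ple (h i) d.
Proof.
  intros [[d0 Hd0] Hdir]. induction N as [|N IH]; intros HS.
  - exists d0. split; auto. intros; lia.
  - destruct IH as [d [Sd Hd]]. { intros; apply HS; lia. }
    destruct (Hdir d (h N) Sd (HS N (Nat.lt_succ_diag_r N))) as [c [Sc [H1 H2]]].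
    exists c. split; auto. intros i Hi. destruct (Nat.eq_dec i N) as [->|]; auto.
    eapply (proj1 (proj2 ple_poset)); [apply Hd; lia|exact H1].
Qed.

Lemma gather S N (P : forall i, E i -> Prop) : directed ple S ->
  (forall i, i < N -> exists z, S z /\ P i (z i)) ->
  (forall i a b, P i a -> le i a b -> P i b) ->
  exists d, S d /\ forall i, i < N -> P i (d i).
Proof.
  intros HS H Hup.
  destruct (dchoice (T := fun _ : nat => forall n, E n) (fun i z => S z /\ (i < N -> P i (z i)))) as [h Hh].
  { intro i. destruct (lt_dec i N) as [Hi|Hi].
    - destruct (H i Hi) as [z Hz]. exists z. tauto.
    - destruct (proj1 HS) as [d Hd]. exists d. split; auto. intro; lia. }
  destruct (@pfin_ub S h N HS (fun i _ => proj1 (Hh i))) as [d [Sd Hd]].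
  exists d. split; auto. intros i Hi. apply Hup with (h i i); [apply Hh; auto|apply Hd; auto].
Qed.

Definition Bapp (y x : forall n, E n) : Prop :=
  exists N, (forall i, i < N -> way_below (le i) (x i) (y i)) /\ (forall i, N <= i -> x i = bot i).

Lemma Bapp_wb y x : Bapp y x -> way_below ple x y.
Proof.
  intros [N [H1 H2]] S s HS Hs Hys.
  pose proof (p_sup_char HS Hs) as Hsi.
  destruct (@gather S N (fun i a => le i (x i) a) HS) as [d [Sd Hd]].
  - intros i Hi. destruct (H1 i Hi (proj S i) (s i) (proj_dir i HS) (Hsi i) (Hys i)) as [a [[z [Hz <-]] Ha]].
    exists z. auto.
  - intros i a b H3 H4. eapply (le_trans (Hc i)); eauto.
  - exists d. split; auto. intro i. destruct (lt_dec i N); auto. rewrite H2 by lia. auto.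
Qed.

Lemma wb_bot i y : way_below (le i) (bot i) y.
Proof. apply bot_wb. auto. Qed.

Lemma Bapp_dir y : directed ple (Bapp y).
Proof.
  split.
  - exists bot, 0. split; intros; [lia|auto].
  - intros a b [N1 [Ha1 Ha2]] [N2 [Hb1 Hb2]].
    assert (Ha : forall i, way_below (le i) (a i) (y i)).
    { intro i. destruct (lt_dec i N1); auto. rewrite Ha2 by lia. apply wb_bot. }
    assert (Hb : forall i, way_below (le i) (b i) (y i)).
    { intro i. destruct (lt_dec i N2); auto. rewrite Hb2 by lia. apply wb_bot. }
    destruct (dchoice (T := E) (fun i c => way_below (le i) c (y i) /\ le i (a i) c /\ le i (b i) c)) as [c Hcc].
    { intro i. apply (proj2 (proj1 (proj2 (Hc i) (y i)))); auto. }
    set (M := Nat.max N1 N2).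
    exists (fun i => if Nat.ltb i M then c i else bot i). split; [|split].
    + exists M. split.
      * intros i Hi. rewrite (proj2 (Nat.ltb_lt i M) Hi). apply Hcc.
      * intros i Hi. assert (Nat.ltb i M = false) as -> by (apply Nat.ltb_ge; lia). auto.
    + intro i. destruct (Nat.ltb i M) eqn:E1.
      * apply Hcc.
      * apply Nat.ltb_ge in E1. rewrite Ha2 by lia. auto.
    + intro i. destruct (Nat.ltb i M) eqn:E1.
      * apply Hcc.
      * apply Nat.ltb_ge in E1. rewrite Hb2 by lia. auto.
Qed.

Lemma Bapp_sup y : is_sup ple (Bapp y) y.
Proof.
  split.
  - intros x [N [H1 H2]] i. destruct (lt_dec i N).
    + apply (wb_le (Hc i)). auto.
    + rewrite H2 by lia. auto.
  - intros u Hu i. apply (proj2 (proj2 (proj2 (Hc i) (y i)))). intros c Hcy.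
    assert (HB : Bapp y (upd bot i c)).
    { exists (S i). split.
      - intros j Hj. destruct (Nat.eq_dec i j) as [<-|Hne].
        + rewrite upd_eq. auto.
        + rewrite upd_neq by auto. apply wb_bot.
      - intros j Hj. apply upd_neq. lia. }
    specialize (Hu _ HB i). rewrite upd_eq in Hu. exact Hu.
Qed.

Lemma p_cont : is_continuous_dcpo ple.
Proof.
  split; [split; [apply ple_poset|]|].
  - intros S HS. destruct (p_sup_exists HS) as [s Hs]. exists s. apply psup_is_sup; auto.
  - intro y. split; [split|split].
    + exists bot. apply Bapp_wb. exists 0. split; intros; [lia|auto].
    + intros a b Ha Hb.
      destruct (Ha _ _ (Bapp_dir y) (Bapp_sup y) (proj1 ple_poset y)) as [a' [Ha' La]].
      destruct (Hb _ _ (Bapp_dir y) (Bapp_sup y) (proj1 ple_poset y)) as [b' [Hb' Lb]].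
      destruct (proj2 (Bapp_dir y) _ _ Ha' Hb') as [c [Hc' [L1 L2]]].
      exists c. split; [apply Bapp_wb; auto|].
      split; eapply (proj1 (proj2 ple_poset)); eauto.
    + intros x Hx i. 
      destruct (Hx (fun z => z = y) y) as [d [-> Hd]]; auto.
      * split. exists y; auto. intros a b -> ->. exists y. split; auto. split; apply (proj1 ple_poset).
      * split. intros d ->. apply (proj1 ple_poset). intros u Hu. apply Hu. auto.
      * apply (proj1 ple_poset).
    + intros u Hu. apply (proj2 (Bapp_sup y)). intros x Hx. apply Hu. apply Bapp_wb. auto.
Qed.

Lemma scott_prod W : scott_open ple W <-> product_topology E (fun n => scott_open (le n)) W.
Proof.
  split.
  - intros [Hup Hsup] y Hy.
    destruct (Hsup _ _ (Bapp_dir y) (Bapp_sup y) Hy) as [x [[N [H1 H2]] Hx]].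
    exists N, (fun i a => way_below (le i) (x i) a). split; [|split].
    + intro i. apply wu_open. auto.
    + intros i Hi. auto.
    + intros z Hz. apply Hup with x; auto. intro i. destruct (lt_dec i N).
      * apply (wb_le (Hc i)). apply Hz; auto.
      * rewrite H2 by lia. auto.
  - intro HW. split.
    + intros x y Hx Hxy. destruct (HW x Hx) as [N [V [HV [Hb Hs]]]]. apply Hs.
      intros i Hi. apply (proj1 (HV i) (x i)); auto.
    + intros S s HS Hs Hws. destruct (HW s Hws) as [N [V [HV [Hb Hsub]]]].
      pose proof (p_sup_char HS Hs) as Hsi.
      destruct (@gather S N V HS) as [d [Sd Hd]].
      * intros i Hi. destruct (proj2 (HV i) _ _ (proj_dir i HS) (Hsi i) (Hb i Hi)) as [a [[z [Hz <-]] Ha]].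
        exists z. auto.
      * intros i a b H1 H2. apply (proj1 (HV i) a b); auto.
      * exists d. split; auto.
Qed.
End Prod.

Set Implicit Arguments.

Lemma scott_topology (D : Type) (le : D -> D -> Prop) : is_topology (scott_open le).
Proof.
  split; [|split].
  - split; auto. intros S s [[d Hd] _] _ _. exists d; auto.
  - intros U V [HU1 HU2] [HV1 HV2]. split.
    + intros x y [H1 H2] Hxy. split; eauto.
    + intros S s HS Hs [H1 H2]. destruct (HU2 S s HS Hs H1) as [d1 [S1 U1]].
      destruct (HV2 S s HS Hs H2) as [d2 [S2 V2]].
      destruct (proj2 HS d1 d2 S1 S2) as [d [Sd [L1 L2]]]. exists d. split; auto. split; eauto.
  - intros F HF. split.
    + intros x y [U [FU Ux]] Hxy. exists U. split; auto. apply (proj1 (HF U FU) x y); auto.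
    + intros S s HS Hs [U [FU Us]]. destruct (proj2 (HF U FU) S s HS Hs Us) as [d [Sd Ud]].
      exists d. split; auto. exists U; auto.
Qed.

Theorem domain_part (X : nat -> Type) (O : forall n, topology (X n)) :
  (forall n, is_topology (O n)) -> (forall n, domain_complete (O n)) ->
  domain_complete (product_topology X O).
Proof.
  intros _ HD.
  destruct (dchoice (T := fun _ : nat => Type) (fun n D => exists (le : D -> D -> Prop) (A : D -> Prop),
    is_continuous_dcpo le /\ G_delta (scott_open le) A /\ homeomorphic (O n) (subspace (scott_open le) A)) HD)
    as [D HD1].
  destruct (dchoice (T := fun n => D n -> D n -> Prop) (fun n le => exists (A : D n -> Prop),
    is_continuous_dcpo le /\ G_delta (scott_open le) A /\ homeomorphic (O n) (subspace (scott_open le) A)) HD1)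
    as [le HD2].
  destruct (dchoice (T := fun n => D n -> Prop) (fun n A => 
    is_continuous_dcpo (le n) /\ G_delta (scott_open (le n)) A /\ homeomorphic (O n) (subspace (scott_open (le n)) A)) HD2)
    as [A HD3].
  set (E := fun n => option (D n)).
  set (leE := fun n => lift_le (le n) : E n -> E n -> Prop).
  set (A' := fun n (z : E n) => exists y, z = Some y /\ A n y).
  assert (HL : forall n, G_delta (scott_open (leE n)) (A' n) /\
                    homeomorphic (O n) (subspace (scott_open (leE n)) (A' n))).
  { intro n. apply lift_domain; apply HD3. }
  assert (Hc : forall n, is_continuous_dcpo (leE n)).
  { intro n. apply lift_cont. apply HD3. }
  assert (Heq : scott_open (ple E leE) = product_topology E (fun n => scott_open (leE n))).
  { apply topo_eq. intro W. apply (scott_prod E leE (fun n => None) Hc (fun n x => I)). }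
  exists (forall n, E n), (ple E leE), (PA E A'). split; [|split].
  - apply (p_cont E leE (fun n => None) Hc (fun n x => I)).
  - rewrite Heq. apply prod_Gdelta.
    + intro n. apply scott_topology.
    + intro n. apply HL.
  - rewrite Heq. apply prod_homeo. intro n. apply HL.
Qed.

Set Implicit Arguments.

Lemma list_lift (A B : Type) (P : B -> Prop) (R : A -> B -> Prop) (l' : list A) :
  (forall a, In a l' -> exists b, P b /\ R a b) ->
  exists l, (forall b, In b l -> P b) /\ forall a, In a l' -> exists b, In b l /\ R a b.
Proof.
  induction l' as [|a l' IH]; intro H.
  - exists nil. split; simpl; tauto.
  - destruct IH as [l [H1 H2]]. { intros; apply H; simpl; auto. }
    destruct (H a (or_introl eq_refl)) as [b [Pb Rb]].
    exists (b :: l). split.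
    + intros b' [<-|Hb']; auto.
    + intros a' [<-|Ha']. exists b; simpl; auto.
      destruct (H2 a' Ha') as [b' [Hb' Rb']]. exists b'; simpl; auto.
Qed.

Lemma compact_image (Y Z : Type) (OY : topology Y) (OZ : topology Z) (e : Y -> Z) K :
  compact OY K -> continuous OY OZ e -> compact OZ (fun z => exists y, K y /\ z = e y).
Proof.
  intros HK He F HF Hcov.
  destruct (HK (fun U => exists W, F W /\ U = (fun y => W (e y)))) as [l' [Hl'1 Hl'2]].
  - intros U [W [FW ->]]. apply He. auto.
  - intros y Ky. destruct (Hcov (e y)) as [W [FW Wy]]; eauto.
    exists (fun y => W (e y)). split; eauto.
  - destruct (list_lift F (fun U W => U = (fun y => W (e y))) l' Hl'1) as [l [H1 H2]].
    exists l. split; auto. intros z [y [Ky ->]].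
    destruct (Hl'2 y Ky) as [U [HU Uy]]. destruct (H2 U HU) as [W [HW ->]]. eauto.
Qed.

Definition lift_top (Y : Type) (O : topology Y) : topology (option Y) :=
  fun W => (forall o, W o) \/ (O (fun y => W (Some y)) /\ ~ W None).

Section LiftTop.
Variables (Y : Type) (O : topology Y).
Hypothesis HT : is_topology O.
Notation LO := (lift_top O).

Lemma lt_full W : LO W -> W None -> forall o, W o.
Proof. intros [H|[_ H]] HN; tauto. Qed.

Lemma lt_topology : is_topology LO.
Proof.
  split; [|split].
  - left; auto.
  - intros U V HU HV. destruct (classic (U None)) as [HUN|HUN].
    + pose proof (lt_full HU HUN) as HUf. destruct HV as [HVf|[HV1 HV2]].
      * left. auto.
      * right. split; [|cbv beta; tauto].
        replace (fun y => U (Some y) /\ V (Some y)) with (fun y => V (Some y)); auto.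
        apply set_ext. intro; split; auto; tauto.
    + destruct HU as [HUf|[HU1 HU2]]; [exfalso; apply HUN; apply HUf|]. right. split; [|cbv beta; tauto].
      destruct HV as [HVf|[HV1 HV2]].
      * replace (fun y => U (Some y) /\ V (Some y)) with (fun y => U (Some y)); auto.
        apply set_ext. intro; split; auto; tauto.
      * apply (proj1 (proj2 HT)); auto.
  - intros F HF. destruct (classic (exists U, F U /\ U None)) as [[U [FU UN]]|Hn].
    + left. intro o. exists U. split; auto. apply (lt_full (HF U FU) UN).
    + right. split.
      * assert (H : O (fun y => exists V, (exists U, F U /\ V = (fun y => U (Some y))) /\ V y)).
        { apply (proj2 (proj2 HT)). intros V [U [FU ->]]. destruct (HF U FU) as [Hf|[H1 H2]].
          - exfalso; apply Hn; exists U; split; auto.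
          - exact H1. }
        replace (fun y => exists U, F U /\ U (Some y)) with
            (fun y => exists V, (exists U, F U /\ V = (fun y => U (Some y))) /\ V y); auto.
        apply set_ext. intro y. split.
        -- intros [V [[U [FU ->]] HV]]. eauto.
        -- intros [U [FU HU]]. exists (fun y => U (Some y)). eauto.
      * intros [U [FU HU]]. apply Hn; eauto.
Qed.

Lemma Some_cont : continuous O LO Some.
Proof.
  intros W [Hf|[H1 H2]].
  - replace (fun x => W (Some x)) with (fun _ : Y => True). apply (proj1 HT).
    apply set_ext. intro; split; auto.
  - exact H1.
Qed.

Lemma lift_open U : O U -> LO (lift_set U).
Proof. intro H. right. simpl. split; auto. Qed.

Lemma lt_lc : locally_compact O -> locally_compact LO.
Proof.
  intros Hlc x U HU Ux. destruct (classic (U None)) as [UN|UN].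
  - exists (fun _ => True), (fun _ => True). split; [|split; [|split; [|split; [|split]]]]; auto.
    + intros F HF Hcov. destruct (Hcov None I) as [W [FW WN]].
      exists (W :: nil). split. intros V [<-|[]]; auto.
      intros y _. exists W. split; simpl; auto. apply (lt_full (HF W FW) WN).
    + intros y _. exact I.
    + left; auto.
    + intros; apply (lt_full HU UN).
  - destruct HU as [Hf|[HU1 HU2]]; [exfalso; apply UN; auto|].
    destruct x as [x|]; [|tauto].
    destruct (Hlc x _ HU1 Ux) as [Q [V [HQc [HQs [HV [Vx [HVQ HQU]]]]]]].
    exists (lift_set Q), (lift_set V). split; [|split; [|split; [|split; [|split]]]].
    + replace (lift_set Q) with (fun z => exists y, Q y /\ z = Some y).
      * apply compact_image with (OY := O); auto. apply Some_cont.
      * apply set_ext. intros [z|]; simpl; split.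
        -- intros [y [Qy E]]. injection E; intros ->; auto.
        -- eauto.
        -- intros [y [_ E]]; discriminate.
        -- tauto.
    + intros [y|] Hy; simpl.
      * apply HQs. intros U' HU' HQU'. apply (Hy (lift_set U')); [apply lift_open; auto| intros [z|]; simpl; auto].
      * apply (Hy (lift_set (fun _ => True))); [apply lift_open; apply (proj1 HT)|intros [z|]; simpl; auto].
    + apply lift_open; auto.
    + simpl; auto.
    + intros [y|]; simpl; auto.
    + intros [y|]; simpl; auto. tauto.
Qed.

Lemma lt_closed_None K : is_closed LO K -> (exists o, K o) -> K None.
Proof.
  intros [Hf|[_ H]] [o Ko].
  - exfalso; apply (Hf o); auto.
  - apply NNPP; auto.
Qed.

Lemma lt_closed_Some K : is_closed LO K -> is_closed O (fun y => K (Some y)).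
Proof.
  intros [Hf|[H _]].
  - unfold is_closed. replace (fun x => ~ K (Some x)) with (fun _ : Y => True); [apply (proj1 HT)|].
    apply set_ext; intro y; split; auto.
  - exact H.
Qed.

Definition ext_closed (K : Y -> Prop) (o : option Y) : Prop :=
  match o with None => True | Some y => K y end.

Lemma ext_closed_closed K : is_closed O K -> is_closed LO (ext_closed K).
Proof. intro H. right. simpl. split; auto. Qed.

Lemma cl_lift_Some x y : closure_pt LO (Some x) (Some y) <-> closure_pt O x y.
Proof.
  split.
  - intros H K HK Kx. apply (H (ext_closed K)); simpl; auto. apply ext_closed_closed; auto.
  - intros H K HK Kx. apply (H (fun y => K (Some y))); auto. apply lt_closed_Some; auto.
Qed.

Lemma cl_lift_None x : closure_pt LO x None.
Proof. intros K HK Kx. apply lt_closed_None; eauto. Qed.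

Lemma cl_None_Some y : ~ closure_pt LO None (Some y).
Proof.
  intro H.
  assert (Hc : is_closed LO (fun o => o = None)).
  { right. simpl. split.
    + replace (fun y : Y => ~ Some y = None) with (fun _ : Y => True); [apply (proj1 HT)|].
      apply set_ext; intro; split; auto; discriminate.
    + tauto. }
  discriminate (H _ Hc eq_refl).
Qed.

Lemma lt_sober : sober O -> sober LO.
Proof.
  intros Hs C [HC [[o0 Co0] Hirr]].
  pose proof (lt_closed_None HC (ex_intro _ o0 Co0)) as CN.
  destruct (classic (exists y, C (Some y))) as [[y0 Cy0]|Hne].
  - assert (Hirr' : irreducible_closed O (fun y => C (Some y))).
    { split; [apply lt_closed_Some; auto|split; [eauto|]].
      intros C1 C2 H1 H2 Hcov.
      destruct (Hirr (ext_closed C1) (ext_closed C2)) as [H|H].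
      - apply ext_closed_closed; auto.
      - apply ext_closed_closed; auto.
      - intros [x|] Hx; simpl; auto.
      - left. intros x Hx. apply (H (Some x) Hx).
      - right. intros x Hx. apply (H (Some x) Hx). }
    destruct (Hs _ Hirr') as [x [Hx Hu]].
    exists (Some x). split.
    + intros [y|].
      * rewrite cl_lift_Some. apply Hx.
      * split; auto. intros _; apply cl_lift_None.
    + intros [x'|] Hx'.
      * f_equal. apply Hu. intro y. rewrite <- cl_lift_Some. apply Hx'.
      * exfalso. apply (@cl_None_Some y0). apply Hx'. auto.
  - exists None. split.
    + intros [y|].
      * split; intro H; [exfalso; apply Hne; eauto|]. exfalso; apply (cl_None_Some H).
      * split; auto. intros _ K _ KN; auto.
    + intros [x'|] Hx'; auto. exfalso. apply Hne. exists x'. apply Hx'.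
      intros K _ Kx; auto.
Qed.
End LiftTop.

Unset Implicit Arguments.

Section ProdTop.
Variables (Y : nat -> Type) (O : forall n, topology (Y n)).
Hypothesis HT : forall n, is_topology (O n).
Notation PO := (product_topology Y O).

Lemma topo_inter {Z : Type} (OZ : topology Z) U V : is_topology OZ -> OZ U -> OZ V -> OZ (fun x => U x /\ V x).
Proof. intros H; apply (proj1 (proj2 H)). Qed.

Definition trunc (N : nat) (V : forall n, Y n -> Prop) : forall n, Y n -> Prop :=
  fun i => if Nat.ltb i N then V i else (fun _ => True).

Lemma trunc_open N V : (forall i, O i (V i)) -> forall i, O i (trunc N V i).
Proof. intros H i. unfold trunc. destruct (Nat.ltb i N); auto. apply (proj1 (HT i)). Qed.

Lemma trunc_lt N V i a : i < N -> trunc N V i a = V i a.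
Proof. intro H. unfold trunc. rewrite (proj2 (Nat.ltb_lt i N) H). auto. Qed.

Lemma trunc_ge N V i a : N <= i -> trunc N V i a = True.
Proof. intro H. unfold trunc. assert (Nat.ltb i N = false) as -> by (apply Nat.ltb_ge; lia). auto. Qed.

Lemma prod_topology : is_topology PO.
Proof.
  split; [|split].
  - intros x _. exists 0, (fun _ _ => True). split; [intro; apply (proj1 (HT _))|split].
    + intros i Hi; lia.
    + auto.
  - intros U V HU HV x [Ux Vx].
    destruct (HU x Ux) as [N1 [V1 [HV1 [Hb1 Hs1]]]].
    destruct (HV x Vx) as [N2 [V2 [HV2 [Hb2 Hs2]]]].
    exists (Nat.max N1 N2), (fun i a => trunc N1 V1 i a /\ trunc N2 V2 i a). split; [|split].
    + intro i. apply topo_inter; auto; apply trunc_open; auto.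
    + intros i Hi. split.
      * destruct (lt_dec i N1). rewrite trunc_lt; auto. rewrite trunc_ge by lia; auto.
      * destruct (lt_dec i N2). rewrite trunc_lt; auto. rewrite trunc_ge by lia; auto.
    + intros y Hy. split.
      * apply Hs1. intros i Hi. rewrite <- (trunc_lt N1 V1 i (y i) Hi). apply Hy. lia.
      * apply Hs2. intros i Hi. rewrite <- (trunc_lt N2 V2 i (y i) Hi). apply Hy. lia.
  - intros F HF x [U [FU Ux]]. destruct (HF U FU x Ux) as [N [V [HV [Hb Hs]]]].
    exists N, V. split; [auto|split; auto]. intros y Hy. exists U; auto.
Qed.

Lemma closed_compl {Z : Type} (OZ : topology Z) U : OZ U -> is_closed OZ (fun x => ~ U x).
Proof.
  intro H. unfold is_closed. replace (fun x => ~ ~ U x) with U; auto.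
  apply set_ext. intro; split; [tauto|apply NNPP].
Qed.

Lemma irr_meet {Z : Type} (OZ : topology Z) C U1 U2 : irreducible_closed OZ C -> OZ U1 -> OZ U2 ->
  (exists y, C y /\ U1 y) -> (exists y, C y /\ U2 y) -> exists y, C y /\ U1 y /\ U2 y.
Proof.
  intros [_ [_ Hirr]] H1 H2 [y1 [C1 U1y]] [y2 [C2 U2y]].
  apply NNPP. intro Hn.
  destruct (Hirr (fun x => ~ U1 x) (fun x => ~ U2 x)) as [H|H].
  - apply closed_compl; auto.
  - apply closed_compl; auto.
  - intros x Cx. apply NNPP. intro H'. apply Hn. exists x. split; auto. split; apply NNPP; tauto.
  - apply (H y1); auto.
  - apply (H y2); auto.
Qed.

Lemma proj_closed n K : is_closed (O n) K -> is_closed PO (fun y => K (y n)).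
Proof. intro H. unfold is_closed. apply (proj_open Y O n (fun a => ~ K a)); auto. Qed.

Lemma prod_sober : (forall n, sober (O n)) -> sober PO.
Proof.
  intros Hs C HCirr. pose proof HCirr as [HC [[y0 Cy0] Hirr]].
  set (Ci := fun i a => forall K, is_closed (O i) K -> (forall y, C y -> K (y i)) -> K a).
  assert (HCi : forall i, irreducible_closed (O i) (Ci i)).
  { intro i. split; [|split].
    - unfold is_closed.
      replace (fun a => ~ Ci i a) with
        (fun a => exists V, (exists K, is_closed (O i) K /\ (forall y, C y -> K (y i)) /\ V = (fun a => ~ K a)) /\ V a).
      + apply (proj2 (proj2 (HT i))). intros V [K [HK [_ ->]]]. exact HK.
      + apply set_ext. intro a. split.
        * intros [V [[K [HK [HCK ->]]] HV]] HCa. apply HV. apply HCa; auto.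
        * intro Hn. unfold Ci in Hn. destruct (not_all_ex_not _ _ Hn) as [K HnK].
          apply imply_to_and in HnK as [HK HnK]. apply imply_to_and in HnK as [HCK HKa].
          exists (fun a => ~ K a). split; [exists K; auto|auto].
    - exists (y0 i). intros K _ HK. auto.
    - intros C1 C2 H1 H2 Hcov.
      destruct (Hirr (fun y => C1 (y i)) (fun y => C2 (y i))) as [H|H].
      + apply proj_closed; auto.
      + apply proj_closed; auto.
      + intros y Cy. apply Hcov. intros K _ HK. auto.
      + left. intros a Ha. apply Ha; auto.
      + right. intros a Ha. apply Ha; auto. }
  destruct (dchoice (T := Y) (fun i x => (forall a, Ci i a <-> closure_pt (O i) x a) /\
      forall x', (forall a, Ci i a <-> closure_pt (O i) x' a) -> x' = x)) as [x Hx].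
  { intro i. apply Hs. apply HCi. }
  assert (Cix : forall i, Ci i (x i)). { intro i. apply (proj1 (Hx i)). intros K _ Kx; auto. }
  assert (Hmeet : forall N V, (forall i, O i (V i)) -> (forall i, i < N -> V i (x i)) ->
                  exists y, C y /\ box Y N V y).
  { intros N V HV. induction N as [|N IH]; intro Hxv.
    - exists y0. split; auto. intros i Hi; lia.
    - destruct IH as [y [Cy Hy]]. { intros; apply Hxv; lia. }
      assert (Hy' : exists y', C y' /\ V N (y' N)).
      { apply NNPP. intro Hn. apply (Cix N (fun a => ~ V N a)).
        - apply closed_compl; auto.
        - intros y' Cy' HV'. apply Hn; eauto.
        - apply Hxv; lia. }
      destruct (irr_meet PO C (box Y N V) (fun y => V N (y N)) HCirr) as [z [Cz [Hz1 Hz2]]].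
      + apply box_open; auto.
      + apply proj_open; auto.
      + eauto.
      + exact Hy'.
      + exists z. split; auto. intros i Hi. destruct (Nat.eq_dec i N) as [->|]; auto. apply Hz1. lia. }
  assert (Cx : C x).
  { apply NNPP. intro Hn. destruct (HC x Hn) as [N [V [HV [Hb Hsub]]]].
    destruct (Hmeet N V HV Hb) as [y [Cy Hy]]. apply (Hsub y Hy). auto. }
  assert (Hcl : forall x' z i, closure_pt PO x' z -> closure_pt (O i) (x' i) (z i)).
  { intros x' z i H K HK Kx. apply (H (fun y => K (y i))); auto. apply proj_closed; auto. }
  exists x. split.
  - intro z. split.
    + intros Cz K HK Kx. apply NNPP. intro Hn. destruct (HK z Hn) as [N [V [HV [Hb Hsub]]]].
      apply (Hsub x); auto. intros i Hi. apply NNPP. intro Hn'.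
      assert (Hcz : closure_pt (O i) (x i) (z i)). { apply (proj1 (proj1 (Hx i) (z i))). intros K' _ HK'; apply (HK' z Cz). }
      apply (Hcz (fun a => ~ V i a)); auto. apply closed_compl; auto.
    + intros Hz. apply Hz; auto.
  - intros x' Hx'. apply functional_extensionality_dep. intro i. apply (proj2 (Hx i)).
    intro a. split.
    + intros Ha K HK Kx'. apply Ha; auto. intros y Cy. apply (Hcl x' y i); auto. apply Hx'; auto.
    + intros Ha K HK HCK. apply Ha; auto. apply HCK. apply Hx'. intros K' _ H; auto.
Qed.
End ProdTop.

Unset Implicit Arguments.

Section ProdLC.
Variables (Y : nat -> Type) (O : forall n, topology (Y n)) (bot : forall n, Y n).
Hypothesis HT : forall n, is_topology (O n).
Hypothesis Hbot : forall n W, O n W -> W (bot n) -> forall a, W a.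
Notation PO := (product_topology Y O).

Lemma prod_compact N (Q : forall n, Y n -> Prop) :
  (forall i, i < N -> compact (O i) (Q i)) ->
  compact PO (fun y => forall i, i < N -> Q i (y i)).
Proof.
  intros HQ F HF Hcov.
  set (Qp := fun y : forall n, Y n => forall i, i < N -> Q i (y i)).
  set (R := fun k => forall z : forall n, Y n, (forall i, i < k -> Q i (z i)) ->
     exists l (V : forall n, Y n -> Prop), (forall U, In U l -> F U) /\ (forall i, O i (V i)) /\
       box Y k V z /\ forall y, Qp y -> box Y k V y -> exists U, In U l /\ U y).
  assert (RN : R N).
  { intros z Hz.
    set (z' := fun i => if Nat.ltb i N then z i else bot i).
    assert (Hz' : forall i, i < N -> z' i = z i).
    { intros i Hi. unfold z'. rewrite (proj2 (Nat.ltb_lt i N) Hi). auto. }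
    assert (Hz'' : forall i, N <= i -> z' i = bot i).
    { intros i Hi. unfold z'. assert (Nat.ltb i N = false) as -> by (apply Nat.ltb_ge; lia). auto. }
    destruct (Hcov z') as [U [FU Uz']].
    { intros i Hi. rewrite Hz'; auto. }
    destruct (HF U FU z' Uz') as [N' [V [HV [Hb Hsub]]]].
    exists (U :: nil), (trunc Y N' V). split; [intros U' [<-|[]]; auto|split; [apply trunc_open; auto|split]].
    - intros i Hi. destruct (lt_dec i N').
      + rewrite trunc_lt by auto. rewrite <- Hz' by auto. apply Hb; auto.
      + rewrite trunc_ge by lia. auto.
    - intros y _ Hy. exists U. split; [simpl; auto|]. apply Hsub. intros i Hi.
      destruct (lt_dec i N).
      + rewrite <- (trunc_lt Y N' V i (y i) Hi). apply Hy; auto.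
      + apply (Hbot i (V i) (HV i)). rewrite <- Hz'' by lia. apply Hb; auto. }
  assert (Rstep : forall k, k < N -> R (S k) -> R k).
  { intros k Hk HR z Hz.
    set (G := fun W => O k W /\ exists l (V : forall n, Y n -> Prop), (forall U, In U l -> F U) /\
       (forall i, O i (V i)) /\ (forall i, i < k -> V i (z i)) /\ W = V k /\
       forall y, Qp y -> box Y (S k) V y -> exists U, In U l /\ U y).
    destruct (HQ k Hk G) as [Ws [HWs1 HWs2]].
    - intros W [HW _]; auto.
    - intros t Qt. destruct (HR (upd z k t)) as [l [V [Hl [HV [Hb Hcv]]]]].
      { intros i Hi. destruct (Nat.eq_dec k i) as [<-|Hne].
        - rewrite upd_eq. auto.
        - rewrite upd_neq by auto. apply Hz. lia. }
      exists (V k). split.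
      + split; auto. exists l, V. split; [auto|split; [auto|split; [|split; auto]]].
        intros i Hi. rewrite <- (upd_neq z k t i) by lia. apply Hb. lia.
      + pose proof (Hb k (Nat.lt_succ_diag_r k)) as Hk0. rewrite upd_eq in Hk0. exact Hk0.
    - assert (Hcomb : forall Ws', (forall W, In W Ws' -> G W) ->
        exists l (V : forall n, Y n -> Prop), (forall U, In U l -> F U) /\ (forall i, O i (V i)) /\
          box Y k V z /\ forall y, Qp y -> box Y k V y -> (exists W, In W Ws' /\ W (y k)) ->
          exists U, In U l /\ U y).
      { induction Ws' as [|W Ws' IH]; intro HG.
        - exists nil, (fun _ _ => True). split; [simpl; tauto|split; [intro; apply (proj1 (HT _))|split]].
          + intros i Hi; exact I.
          + intros y _ _ [W [[] _]].
        - destruct IH as [l2 [V2 [Hl2 [HV2 [Hb2 Hc2]]]]]. { intros; apply HG; simpl; auto. }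
          destruct (HG W (or_introl eq_refl)) as [_ [l1 [V1 [Hl1 [HV1 [Hb1 [-> Hc1]]]]]]].
          exists (l1 ++ l2), (fun i a => V1 i a /\ V2 i a). split; [|split; [|split]].
          + intros U HU. apply in_app_or in HU as [HU|HU]; auto.
          + intro i. apply topo_inter; auto.
          + intros i Hi. split; auto.
          + intros y Qy Hy [W' [[<-|HW'] HW'y]].
            * destruct (Hc1 y Qy) as [U [HU Uy]].
              { intros i Hi. destruct (Nat.eq_dec i k) as [->|]; auto. apply Hy. lia. }
              exists U. split; auto. apply in_or_app; auto.
            * destruct (Hc2 y Qy) as [U [HU Uy]]; eauto.
              { intros i Hi. apply Hy; auto. }
              exists U. split; auto. apply in_or_app; auto. }
      destruct (Hcomb Ws HWs1) as [l [V [Hl [HV [Hb Hc]]]]].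
      exists l, V. split; [auto|split; [auto|split; [auto|]]].
      intros y Qy Hy. apply Hc; auto; apply HWs2; apply Qy; auto. }
  assert (R0 : R 0).
  { assert (H : forall j, j <= N -> R (N - j)).
    { induction j as [|j IH]; intro Hj.
      - rewrite Nat.sub_0_r. auto.
      - apply Rstep; [lia|]. replace (S (N - S j)) with (N - j) by lia. apply IH; lia. }
    replace 0 with (N - N) by lia. apply H; auto. }
  destruct (R0 bot) as [l [V [Hl [HV [Hb Hc]]]]]. { intros; lia. }
  exists l. split; auto. intros y Qy. apply Hc; auto. intros i Hi; lia.
Qed.

Lemma prod_lc : (forall n, locally_compact (O n)) -> locally_compact PO.
Proof.
  intros Hlc x W HW Wx. destruct (HW x Wx) as [N [V [HV [Hb Hsub]]]].
  destruct (dchoice (T := fun i => ((Y i -> Prop) * (Y i -> Prop))%type) (fun i p =>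
     O i (snd p) /\ snd p (x i) /\ (forall a, snd p a -> fst p a) /\
     (i < N -> compact (O i) (fst p) /\ saturated (O i) (fst p) /\ forall a, fst p a -> V i a)))
     as [p Hp].
  { intro i. destruct (lt_dec i N) as [Hi|Hi].
    - destruct (Hlc i (x i) (V i) (HV i) (Hb i Hi)) as [Q [V' [H1 [H2 [H3 [H4 [H5 H6]]]]]]].
      exists (Q, V'). simpl. auto 10.
    - exists ((fun _ => True), (fun _ => True)). simpl. split; [apply (proj1 (HT i))|split; auto].
      split; auto. intro; lia. }
  exists (fun y => forall i, i < N -> fst (p i) (y i)), (box Y N (fun i => snd (p i))).
  split; [|split; [|split; [|split; [|split]]]].
  - apply prod_compact. intros i Hi. apply Hp; auto.
  - intros y Hy i Hi. apply (proj1 (proj2 (proj2 (proj2 (proj2 (Hp i))) Hi))).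
    intros U HU HQU. apply (Hy (fun z => U (z i))).
    + apply proj_open; auto.
    + intros z Hz. apply HQU. apply Hz; auto.
  - apply box_open. intro i. apply Hp.
  - intros i Hi. apply Hp.
  - intros y Hy i Hi. apply (proj1 (proj2 (proj2 (Hp i)))). apply Hy; auto.
  - intros y Hy. apply Hsub. intros i Hi. apply (proj2 (proj2 (proj2 (proj2 (proj2 (Hp i))) Hi))). apply Hy; auto.
Qed.
End ProdLC.

Unset Implicit Arguments.

Theorem lcs_part (X : nat -> Type) (O : forall n, topology (X n)) :
  (forall n, is_topology (O n)) -> (forall n, LCS_complete (O n)) ->
  LCS_complete (product_topology X O).
Proof.
  intros _ HD.
  destruct (dchoice (T := fun _ : nat => Type) (fun n Y => exists (OY : topology Y) (A : Y -> Prop),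
    is_topology OY /\ locally_compact OY /\ sober OY /\ G_delta OY A /\
    homeomorphic (O n) (subspace OY A)) HD) as [Y HD1].
  destruct (dchoice (T := fun n => topology (Y n)) (fun n OY => exists (A : Y n -> Prop),
    is_topology OY /\ locally_compact OY /\ sober OY /\ G_delta OY A /\
    homeomorphic (O n) (subspace OY A)) HD1) as [OY HD2].
  destruct (dchoice (T := fun n => Y n -> Prop) (fun n A =>
    is_topology (OY n) /\ locally_compact (OY n) /\ sober (OY n) /\ G_delta (OY n) A /\
    homeomorphic (O n) (subspace (OY n) A)) HD2) as [A HD3].
  set (E := fun n => option (Y n)).
  set (OE := fun n => lift_top (OY n) : topology (E n)).
  set (A' := fun n (z : E n) => exists y, z = Some y /\ A n y).
  assert (HTn : forall n, is_topology (OY n)) by (intro n; apply HD3).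
  assert (HTE : forall n, is_topology (OE n)) by (intro n; apply lt_topology; auto).
  assert (HL : forall n, G_delta (OE n) (A' n) /\ homeomorphic (O n) (subspace (OE n) (A' n))).
  { intro n. destruct (@embed_transfer (Y n) (E n) (OY n) (OE n) Some (lift_set (fun _ => True)) (A n)) as [H1 H2].
    - intros U HU. exists (lift_set U). split; [apply lift_open; auto|]. intro; simpl; tauto.
    - intros U' HU'. apply (Some_cont (HTn n)). auto.
    - apply lift_open. apply (proj1 (HTn n)).
    - intros [z|]; simpl. split; eauto. split; [tauto|]. intros [y Hy]; discriminate.
    - intros y y' H; injection H; auto.
    - apply HD3.
    - split; auto. eapply homeo_trans; [apply HD3|exact H2]. }
  exists (forall n, E n), (product_topology E OE), (PA E A').
  split; [|split; [|split; [|split]]].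
  - apply prod_topology; auto.
  - apply (prod_lc E OE (fun n => None) HTE).
    + intros n W HW HWN. apply (lt_full HW HWN).
    + intro n. apply lt_lc; auto. apply HD3.
  - apply prod_sober; auto. intro n. apply lt_sober; auto. apply HD3.
  - apply prod_Gdelta; auto. intro n; apply HL.
  - apply prod_homeo. intro n; apply HL.
Qed.

Theorem proposition14p2 :
  (forall (X : nat -> Type) (O : forall n, topology (X n)),
     (forall n, is_topology (O n)) ->
     (forall n, domain_complete (O n)) ->
     domain_complete (product_topology X O)) /\
  (forall (X : nat -> Type) (O : forall n, topology (X n)),
     (forall n, is_topology (O n)) ->
     (forall n, LCS_complete (O n)) ->
     LCS_complete (product_topology X O)).
Proof. split; [apply domain_part|apply lcs_part]. Qed.
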